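(* Let $p\ge q\ge d+1$ be positive integers. Let $\mathcal F$ be an infinite family of closed convex sets in $\mathbb R^d$ satisfying the $(d+1,d+1)$-property, and let $\mathcal B$ be a $(q-d)$-free family of $p-d$ convex sets in $\mathbb R^d$. If $\mathcal F\cup\mathcal B$ satisfies the $(p,q)$-property, then $\pi(\mathcal F)=1$, i.e., all members of $\mathcal F$ have a common point.
   Context: A family of at least $p$ sets satisfies the $(p,q)$-property if among any $p$ of its members there are $q$ with a common point. A family of convex sets in $\mathbb R^d$ is $m$-free if all its members are compact and no $m+1$ of its members have a common point. $\pi(\mathcal F)$ denotes the minimum number of points needed to meet every member of $\mathcal F$. *)

(* Defs.v *)
From Stdlib Require Fin.
From Stdlib Require Import Reals List.
Import ListNotations.
Open Scope R_scope.

Definition point (d : nat) : Type := Fin.t d -> R.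

Definition pset (d : nat) : Type := point d -> Prop.
Definition pfamily (d : nat) : Type := pset d -> Prop.

Definition convex {d : nat} (S : pset d) : Prop :=
  forall (x y : point d) (t : R), S x -> S y -> 0 <= t <= 1 ->
    S (fun i => t * x i + (1 - t) * y i).

(* Closedness: closed under limits of (coordinatewise, equivalently
   Euclidean) convergent sequences. *)
Definition closed {d : nat} (S : pset d) : Prop :=
  forall (u : nat -> point d) (x : point d),
    (forall n, S (u n)) -> (forall i, Un_cv (fun n => u n i) (x i)) -> S x.

Definition bounded {d : nat} (S : pset d) : Prop :=
  exists M : R, forall x, S x -> forall i, Rabs (x i) <= M.

(* Compact in R^d = closed and bounded (Heine-Borel). *)
Definition compact {d : nat} (S : pset d) : Prop := closed S /\ bounded S.

Definition members {d : nat} (G : pfamily d) (L : list (pset d)) : Prop :=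
  NoDup L /\ forall S, In S L -> G S.

Definition common_point {d : nat} (L : list (pset d)) : Prop :=
  exists x : point d, forall S, In S L -> S x.

Definition at_least {d : nat} (n : nat) (G : pfamily d) : Prop :=
  exists L, members G L /\ length L = n.

Definition has_card {d : nat} (n : nat) (G : pfamily d) : Prop :=
  exists L, NoDup L /\ length L = n /\ forall S, G S <-> In S L.

Definition infinite_family {d : nat} (G : pfamily d) : Prop :=
  ~ exists L : list (pset d), forall S, G S -> In S L.

Definition pq_property {d : nat} (p q : nat) (G : pfamily d) : Prop :=
  at_least p G /\
  forall L, members G L -> length L = p ->
    exists L', NoDup L' /\ length L' = q /\ incl L' L /\ common_point L'.

Definition m_free {d : nat} (m : nat) (G : pfamily d) : Prop :=
  (forall S, G S -> convex S /\ compact S) /\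
  forall L, members G L -> length L = (m + 1)%nat -> ~ common_point L.

Definition family_union {d : nat} (F B : pfamily d) : pfamily d :=
  fun S => F S \/ B S.

(* Main.v *)
Require Import Defs.
From Stdlib Require Import Reals List.
From Stdlib Require Import Permutation Lia Lra Classical ClassicalEpsilon FunctionalExtensionality.
From Stdlib Require Rtopology.
Import ListNotations.
Open Scope R_scope.

Definition lsum (idx : list nat) (f : nat -> R) : R :=
  fold_right (fun k acc => f k + acc) 0 idx.

Lemma lsum_cons k idx f : lsum (k :: idx) f = f k + lsum idx f.
Proof. reflexivity. Qed.

Lemma lsum_perm idx idx' f : Permutation idx idx' -> lsum idx f = lsum idx' f.
Proof.
  induction 1; simpl; try lra.
Qed.

Lemma lsum_ext idx f g : (forall k, In k idx -> f k = g k) -> lsum idx f = lsum idx g.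
Proof.
  induction idx; simpl; intros H; auto.
  rewrite H by auto. rewrite IHidx; auto.
Qed.

Lemma lsum_plus idx f g : lsum idx (fun k => f k + g k) = lsum idx f + lsum idx g.
Proof. induction idx; simpl; lra. Qed.

Lemma lsum_minus idx f g : lsum idx (fun k => f k - g k) = lsum idx f - lsum idx g.
Proof. induction idx; simpl; lra. Qed.

Lemma lsum_scal idx a f : lsum idx (fun k => a * f k) = a * lsum idx f.
Proof. induction idx; simpl; [ring|]. rewrite IHidx. ring. Qed.

Lemma lsum_nonneg idx f : (forall k, In k idx -> 0 <= f k) -> 0 <= lsum idx f.
Proof.
  induction idx; simpl; intros H; try lra.
  pose proof (H a (or_introl eq_refl)). pose proof (IHidx (fun k h => H k (or_intror h))). lra.
Qed.

Lemma lsum_zero_each idx f : (forall k, In k idx -> 0 <= f k) -> lsum idx f = 0 ->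
  forall k, In k idx -> f k = 0.
Proof.
  induction idx; simpl; intros H Hs k Hk; [contradiction|].
  pose proof (H a (or_introl eq_refl)).
  pose proof (lsum_nonneg idx f (fun k h => H k (or_intror h))).
  destruct Hk as [<-|Hk]; [lra|].
  apply IHidx; auto. lra.
Qed.

Lemma hom_aux : forall n (eqs : list (nat -> R)) (idx : list nat), length eqs = n -> NoDup idx ->
  (length eqs < length idx)%nat ->
  exists c : nat -> R, (exists k, In k idx /\ c k <> 0) /\
    forall e, In e eqs -> lsum idx (fun k => e k * c k) = 0.
Proof.
  induction n as [|n IHn]; intros [|e rest] idx Hn Hnd Hlen; simpl in Hn; try lia.
  { destruct idx as [|k0 idx]; simpl in Hlen; [lia|].
    exists (fun k => if Nat.eq_dec k k0 then 1 else 0). split.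
    + exists k0. split; [left; auto|]. destruct (Nat.eq_dec k0 k0); [lra|congruence].
    + intros e [].
  }
  { assert (IH : forall eqs idx, length eqs = length rest -> NoDup idx -> (length eqs < length idx)%nat ->
  exists c : nat -> R, (exists k, In k idx /\ c k <> 0) /\
    forall e, In e eqs -> lsum idx (fun k => e k * c k) = 0) by (intros eqs0 idx0 H1 H2 H3; apply (IHn eqs0); auto; lia).
       clear IHn.
  simpl in Hlen.
    destruct (classic (exists k, In k idx /\ e k <> 0)) as [[k0 [Hk0 Hek0]]|Hno].
    + destruct (in_split _ _ Hk0) as [l1 [l2 Heq]].
      set (idx' := l1 ++ l2).
      assert (Hperm : Permutation idx (k0 :: idx')).
      { subst idx idx'. apply Permutation_sym, Permutation_middle. }
      assert (Hnd' : NoDup idx').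
      { subst idx idx'. eapply NoDup_remove_1; eauto. }
      assert (Hnin : ~ In k0 idx').
      { subst idx idx'. eapply NoDup_remove_2; eauto. }
      assert (Hl' : length idx = S (length idx')).
      { rewrite (Permutation_length Hperm). reflexivity. }
      destruct (IH (map (fun r k => r k - (r k0 / e k0) * e k) rest) idx')
        as [c' [[k1 [Hk1 Hc'k1]] Hc']].
      { rewrite length_map. lia. } { exact Hnd'. } { rewrite length_map. lia. }
      set (S := lsum idx' (fun k => e k * c' k)).
      exists (fun k => if Nat.eq_dec k k0 then - S / e k0 else c' k).
      assert (Hagree : forall g : nat -> R,
        lsum idx (fun k => g k * (if Nat.eq_dec k k0 then - S / e k0 else c' k))
        = g k0 * (- S / e k0) + lsum idx' (fun k => g k * c' k)).
      { intros g. rewrite (lsum_perm _ _ _ Hperm). rewrite lsum_cons.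
        destruct (Nat.eq_dec k0 k0); [|congruence]. f_equal.
        apply lsum_ext. intros k Hk. destruct (Nat.eq_dec k k0); [subst; contradiction|auto]. }
      split.
      * exists k1. split.
        -- apply (Permutation_in _ (Permutation_sym Hperm)). right; auto.
        -- destruct (Nat.eq_dec k1 k0); [subst; contradiction|auto].
      * intros r [<-|Hr].
        -- rewrite Hagree. fold S. field. auto.
        -- rewrite Hagree.
           pose proof (Hc' _ (in_map (fun r k => r k - (r k0 / e k0) * e k) _ _ Hr)) as H0.
           simpl in H0.
           assert (H1 : lsum idx' (fun k => r k * c' k) = (r k0 / e k0) * S).
           { unfold S. rewrite <- lsum_scal.
             assert (H2: lsum idx' (fun k => r k * c' k - r k0 / e k0 * (e k * c' k)) = 0).
             { rewrite <- H0. apply lsum_ext. intros; ring. }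
             rewrite lsum_minus in H2. lra. }
           rewrite H1. field. auto.
    + destruct (IH rest idx eq_refl Hnd) as [c [Hnt Hc]]; [lia|].
      exists c. split; auto.
      intros r [<-|Hr]; auto.
      transitivity (lsum idx (fun _ => 0)).
      * apply lsum_ext. intros k Hk. destruct (Req_dec (e k) 0) as [->|Hne]; [ring|].
        exfalso; apply Hno; eauto.
      * clear. induction idx; simpl; lra. }
Qed.

Lemma hom : forall (eqs : list (nat -> R)) (idx : list nat), NoDup idx ->
  (length eqs < length idx)%nat ->
  exists c : nat -> R, (exists k, In k idx /\ c k <> 0) /\
    forall e, In e eqs -> lsum idx (fun k => e k * c k) = 0.
Proof. intros; eapply hom_aux; eauto. Qed.

Lemma conv_comb {d : nat} (S : pset d) : convex S ->
  forall idx (w : nat -> R) (x : nat -> point d),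
  (forall k, In k idx -> 0 <= w k) ->
  (forall k, In k idx -> 0 < w k -> S (x k)) ->
  0 < lsum idx w ->
  S (fun i => lsum idx (fun k => w k * x k i) / lsum idx w).
Proof.
  intros Hc. induction idx as [|k idx IH]; intros w x Hw Hx Hpos.
  - simpl in Hpos; lra.
  - simpl in Hpos |- *.
    pose proof (Hw k (or_introl eq_refl)) as Hwk.
    assert (Hw' : forall k, In k idx -> 0 <= w k) by (intros; apply Hw; right; auto).
    pose proof (lsum_nonneg idx w Hw') as Hs'.
    destruct (Rle_lt_dec (lsum idx w) 0) as [Hz|Hp].
    + assert (Hz0 : lsum idx w = 0) by lra.
      pose proof (lsum_zero_each idx w Hw' Hz0) as Hall.
      assert (Hwk' : 0 < w k) by (unfold lsum in Hz0; lra).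
      assert (E : (fun i => (w k * x k i + lsum idx (fun k0 => w k0 * x k0 i)) / (w k + lsum idx w)) = x k).
      { apply functional_extensionality; intros i.
        rewrite Hz0. rewrite (lsum_ext idx _ (fun _ => 0)).
        - replace (lsum idx (fun _ => 0)) with 0 by (clear; induction idx; simpl; lra).
          field. lra.
        - intros k0 Hk0. rewrite Hall; auto. ring. }
      unfold lsum in E |- *. simpl in E. rewrite E. apply Hx; [left; auto|auto].
    + pose proof (IH w x Hw' (fun k h => Hx k (or_intror h)) Hp) as Hz.
      destruct (Rle_lt_dec (w k) 0) as [Hk0|Hk0].
      * assert (w k = 0) by lra.
        assert (E : (fun i => (w k * x k i + lsum idx (fun k0 => w k0 * x k0 i)) / (w k + lsum idx w))
                    = (fun i => lsum idx (fun k0 => w k0 * x k0 i) / lsum idx w)).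
        { apply functional_extensionality; intros i. rewrite H. field. lra. }
        unfold lsum in E |- *. simpl in E. rewrite E. exact Hz.
      * pose proof (Hx k (or_introl eq_refl) Hk0) as Hxk.
        set (t := w k / (w k + lsum idx w)).
        assert (Ht : 0 <= t <= 1).
        { unfold t. split.
          - apply Rmult_le_pos; [lra|]. apply Rlt_le, Rinv_0_lt_compat; lra.
          - apply (Rmult_le_reg_r (w k + lsum idx w)); [lra|]. field_simplify; lra. }
        pose proof (Hc _ _ t Hxk Hz Ht) as Hcomb.
        assert (E : (fun i => t * x k i + (1 - t) * (lsum idx (fun k0 => w k0 * x k0 i) / lsum idx w))
                    = (fun i => (w k * x k i + lsum idx (fun k0 => w k0 * x k0 i)) / (w k + lsum idx w))).
        { apply functional_extensionality; intros i. unfold t. field. lra. }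
        unfold lsum in E, Hcomb |- *. simpl in E. rewrite <- E. exact Hcomb.
Qed.


Fixpoint allfin (n : nat) : list (Fin.t n) :=
  match n with
  | O => []
  | S m => Fin.F1 :: map Fin.FS (allfin m)
  end.

Lemma allfin_In n (i : Fin.t n) : In i (allfin n).
Proof.
  induction i; simpl; [left; auto|right]. apply in_map; auto.
Qed.

Lemma allfin_length n : length (allfin n) = n.
Proof. induction n; simpl; auto. rewrite length_map; auto. Qed.

Lemma In_skipn {A} (y : A) m l : In y (skipn m l) -> In y l.
Proof. revert m; induction l; intros [|m]; simpl; auto. intros H; right; eapply IHl; eauto. Qed.

Lemma In_firstn {A} (y : A) m l : In y (firstn m l) -> In y l.
Proof. revert m; induction l; intros [|m]; simpl; try tauto. intros [H|H]; auto. right; eapply IHl; eauto. Qed.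

Definition remk {A} (k : nat) (l : list A) := firstn k l ++ skipn (S k) l.

Lemma remk_incl {A} k (l : list A) : incl (remk k l) l.
Proof. intros y Hy. unfold remk in Hy. apply in_app_or in Hy as [H|H]; eauto using In_firstn, In_skipn. Qed.

Lemma remk_length {A} k (l : list A) : (k < length l)%nat -> length (remk k l) = pred (length l).
Proof. intros. unfold remk. rewrite length_app, length_firstn, length_skipn, Nat.min_l by lia. lia. Qed.

Lemma remk_nth {A} k j (l : list A) dflt : (j < length l)%nat -> j <> k -> In (nth j l dflt) (remk k l).
Proof.
  intros Hj Hne.
  destruct (Nat.lt_ge_cases j k) as [Hlt|Hge].
  - assert (Hm : (j < Nat.min k (length l))%nat) by (destruct (Nat.min_spec k (length l)) as [[_ ->]|[_ ->]]; lia).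
    replace (nth j l dflt) with (nth j (remk k l) dflt).
    + apply nth_In. unfold remk. rewrite length_app, length_firstn. lia.
    + unfold remk. rewrite app_nth1 by (rewrite length_firstn; lia).
      rewrite nth_firstn. destruct (Nat.ltb_spec j k); [auto|lia].
  - assert (Hk: (k < length l)%nat) by lia.
    replace (nth j l dflt) with (nth (j - 1) (remk k l) dflt).
    + apply nth_In. rewrite remk_length; lia.
    + unfold remk. rewrite app_nth2 by (rewrite length_firstn, Nat.min_l by lia; lia).
      rewrite length_firstn, Nat.min_l, nth_skipn by lia. f_equal. lia.
Qed.

Lemma helly_aux {d : nat} : forall n (Ls : list (pset d)), length Ls = n ->
  (forall S, In S Ls -> convex S) ->
  (forall L', incl L' Ls -> (length L' <= d + 1)%nat -> common_point L') ->
  common_point Ls.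
Proof.
  induction n as [|m IH]; intros Ls Hlen Hconv HH.
  - apply HH; [apply incl_refl|lia].
  - destruct (Nat.le_gt_cases (S m) (d + 1)) as [Hsmall|Hbig].
    { apply HH; [apply incl_refl|lia]. }
    set (n := S m) in *.
    assert (Hex : forall k, exists x : point d, (k < n)%nat -> forall S, In S (remk k Ls) -> S x).
    { intros k. destruct (Nat.lt_ge_cases k n) as [Hk|Hk].
      - assert (Hc : common_point (remk k Ls)).
        { apply (IH (remk k Ls)).
          + rewrite remk_length; lia.
          + intros S HS. apply Hconv. apply (remk_incl k Ls). auto.
          + intros L' HL' Hl. apply HH; auto. eapply incl_tran; eauto. apply remk_incl. }
        destruct Hc as [x Hx]. exists x. auto.
      - exists (fun _ => 0). intros; lia. }
    set (xs := fun k => proj1_sig (constructive_indefinite_description _ (Hex k))).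
    assert (Hxs : forall k, (k < n)%nat -> forall S, In S (remk k Ls) -> S (xs k)).
    { intros k. unfold xs. destruct (constructive_indefinite_description _ (Hex k)); simpl; auto. }
    set (dflt := (fun _ : point d => True) : pset d).
    assert (Hmem : forall j k, (j < n)%nat -> (k < n)%nat -> j <> k -> nth j Ls dflt (xs k)).
    { intros j k Hj Hk Hne. apply Hxs; auto. apply remk_nth; lia. }
    set (idx := seq 0 n).
    destruct (hom ((fun _ => 1) :: map (fun i k => xs k i) (allfin d)) idx (seq_NoDup _ _))
      as [c [[k1 [Hk1 Hck1]] Hc]].
    { simpl. rewrite length_map, allfin_length. unfold idx. rewrite length_seq. lia. }
    assert (Hsum : lsum idx c = 0).
    { rewrite <- (Hc _ (or_introl eq_refl)). apply lsum_ext; intros; ring. }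
    assert (Hsumx : forall i, lsum idx (fun k => xs k i * c k) = 0).
    { intros i. apply (Hc (fun k => xs k i)). right. apply (in_map (fun i k => xs k i)). apply allfin_In. }
    set (wp := fun k => if Rlt_dec 0 (c k) then c k else 0).
    set (wn := fun k => if Rlt_dec (c k) 0 then - c k else 0).
    assert (Hwp : forall k, 0 <= wp k) by (intros k; unfold wp; destruct Rlt_dec; lra).
    assert (Hwn : forall k, 0 <= wn k) by (intros k; unfold wn; destruct Rlt_dec; lra).
    assert (Hcw : forall k, c k = wp k - wn k)
      by (intros k; unfold wp, wn; destruct (Rlt_dec 0 (c k)); destruct (Rlt_dec (c k) 0); lra).
    assert (Hs : lsum idx wp = lsum idx wn).
    { rewrite (lsum_ext idx c (fun k => wp k - wn k)) in Hsum by auto.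
      rewrite lsum_minus in Hsum. lra. }
    assert (Hsx : forall i, lsum idx (fun k => wp k * xs k i) = lsum idx (fun k => wn k * xs k i)).
    { intros i. specialize (Hsumx i).
      rewrite (lsum_ext idx _ (fun k => wp k * xs k i - wn k * xs k i)) in Hsumx
        by (intros k _; rewrite Hcw; ring).
      rewrite lsum_minus in Hsumx. lra. }
    assert (Hpos : 0 < lsum idx wp).
    { destruct (Rle_lt_dec (lsum idx wp) 0) as [Hle|]; auto. exfalso.
      assert (H0 : lsum idx wp = 0) by (pose proof (lsum_nonneg idx wp (fun k _ => Hwp k)); lra).
      pose proof (lsum_zero_each idx wp (fun k _ => Hwp k) H0 k1 Hk1).
      rewrite Hs in H0.
      pose proof (lsum_zero_each idx wn (fun k _ => Hwn k) H0 k1 Hk1).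
      apply Hck1. rewrite Hcw. lra. }
    set (y := fun i => lsum idx (fun k => wp k * xs k i) / lsum idx wp).
    exists y. intros S HS.
    destruct (In_nth Ls S dflt HS) as [j [Hj Hjs]].
    rewrite Hlen in Hj. subst S.
    assert (Hidx : forall k, In k idx -> (k < n)%nat).
    { intros k Hk. unfold idx in Hk. apply in_seq in Hk. lia. }
    destruct (Rlt_dec 0 (c j)) as [Hcj|Hcj].
    + assert (E : y = fun i => lsum idx (fun k => wn k * xs k i) / lsum idx wn).
      { apply functional_extensionality; intros i. unfold y. rewrite Hsx, Hs. reflexivity. }
      rewrite E. apply conv_comb.
      * apply Hconv. apply nth_In. lia.
      * auto.
      * intros k Hk Hwk. apply Hmem; auto. intros Heq; rewrite <- Heq in Hwk. unfold wn in Hwk.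
        destruct (Rlt_dec (c j) 0); lra.
      * rewrite <- Hs; auto.
    + unfold y. apply conv_comb.
      * apply Hconv. apply nth_In. lia.
      * auto.
      * intros k Hk Hwk. apply Hmem; auto. intros Heq; rewrite <- Heq in Hwk. unfold wp in Hwk.
        destruct (Rlt_dec 0 (c j)); lra.
      * auto.
Qed.

Lemma helly {d : nat} (Ls : list (pset d)) :
  (forall S, In S Ls -> convex S) ->
  (forall L', incl L' Ls -> (length L' <= d + 1)%nat -> common_point L') ->
  common_point Ls.
Proof. eapply helly_aux; eauto. Qed.


Lemma Un_cv_ext (u v : nat -> R) l : (forall n, u n = v n) -> Un_cv u l -> Un_cv v l.
Proof. intros He H eps Heps. destruct (H eps Heps) as [N HN]. exists N. intros n Hn. rewrite <- He. auto. Qed.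

Lemma Un_cv_const (c : R) : Un_cv (fun _ => c) c.
Proof. intros eps Heps. exists O. intros n _. unfold R_dist. replace (c - c) with 0 by ring. rewrite Rabs_R0. auto. Qed.

Lemma cv_invn : Un_cv (fun n => / (INR n + 1)) 0.
Proof.
  intros eps Heps. destruct (archimed_cor1 eps Heps) as [N [HN HN0]].
  exists N. intros n Hn. unfold R_dist. rewrite Rminus_0_r.
  assert (HNp : 0 < INR N) by (apply lt_0_INR; auto).
  assert (Hle : INR N <= INR n) by (apply le_INR; lia).
  rewrite Rabs_pos_eq by (apply Rlt_le, Rinv_0_lt_compat; lra).
  apply Rle_lt_trans with (/ INR N); auto.
  apply Rinv_le_contravar; lra.
Qed.

Lemma incr_ge (phi : nat -> nat) : (forall n, (phi n < phi (S n))%nat) -> forall n, (n <= phi n)%nat.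
Proof. intros H n. induction n; [lia|]. specialize (H n). lia. Qed.

Lemma incr_mono (phi : nat -> nat) : (forall n, (phi n < phi (S n))%nat) -> forall n m, (n <= m)%nat -> (phi n <= phi m)%nat.
Proof. intros H n m Hnm. induction Hnm; auto. specialize (H m). lia. Qed.

Lemma subseq_cv (v : nat -> R) a phi : (forall n, (phi n < phi (S n))%nat) -> Un_cv v a -> Un_cv (fun n => v (phi n)) a.
Proof.
  intros Hphi H eps Heps. destruct (H eps Heps) as [N HN]. exists N. intros n Hn.
  apply HN. pose proof (incr_ge phi Hphi n). lia.
Qed.

Lemma BW1 (u : nat -> R) M : (forall n, Rabs (u n) <= M) ->
  exists (phi : nat -> nat) l, (forall n, (phi n < phi (S n))%nat) /\ Un_cv (fun n => u (phi n)) l.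
Proof.
  intros Hb.
  destruct (Rtopology.Bolzano_Weierstrass u (fun c => -M <= c <= M) (Rtopology.compact_P3 (-M) M)) as [l Hl].
  { intros n. specialize (Hb n). unfold Rabs in Hb; destruct (Rcase_abs (u n)); lra. }
  assert (Hg : forall N n, exists p, (N <= p)%nat /\ Rabs (u p - l) < / (INR n + 1)).
  { intros N n. assert (Hp : 0 < / (INR n + 1)) by (apply Rinv_0_lt_compat; pose proof (pos_INR n); lra).
    destruct (Hl (Rtopology.disc l (mkposreal _ Hp)) N) as [p [Hp1 Hp2]].
    { exists (mkposreal _ Hp). intros y Hy; exact Hy. }
    exists p; split; auto. }
  set (g := fun N n => proj1_sig (constructive_indefinite_description _ (Hg N n))).
  assert (Hgp : forall N n, (N <= g N n)%nat /\ Rabs (u (g N n) - l) < / (INR n + 1)).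
  { intros N n. unfold g. destruct (constructive_indefinite_description _ (Hg N n)); simpl; auto. }
  set (phi := fix f (n : nat) : nat := match n with O => g O O | S m => g (S (f m)) (S m) end).
  assert (Hphi0 : forall n, Rabs (u (phi n) - l) < / (INR n + 1)).
  { intros [|n]; simpl; apply Hgp. }
  exists phi, l. split.
  - intros n. change (phi (S n)) with (g (S (phi n)) (S n)). pose proof (proj1 (Hgp (S (phi n)) (S n))). lia.
  - intros eps Heps. destruct (cv_invn eps Heps) as [N HN]. exists N. intros n Hn.
    specialize (HN n Hn). unfold R_dist in *. rewrite Rminus_0_r in HN.
    pose proof (Hphi0 n). pose proof (Rle_abs (/ (INR n + 1))). lra.
Qed.

Lemma BWd_aux {d : nat} (u : nat -> point d) M : (forall n i, Rabs (u n i) <= M) ->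
  forall l : list (Fin.t d), exists phi (z : point d), (forall n, (phi n < phi (S n))%nat) /\
    forall i, In i l -> Un_cv (fun n => u (phi n) i) (z i).
Proof.
  intros Hb l. induction l as [|j l IH].
  - exists (fun n => n), (fun _ => 0). split; [intros; lia|intros i []].
  - destruct IH as [phi [z [Hphi Hz]]].
    destruct (BW1 (fun n => u (phi n) j) M (fun n => Hb _ _)) as [psi [a [Hpsi Ha]]].
    exists (fun n => phi (psi n)), (fun i => if Fin.eq_dec i j then a else z i). split.
    + intros n. pose proof (Hpsi n). pose proof (incr_mono phi Hphi (S (psi n)) (psi (S n))). specialize (Hphi (psi n)). lia.
    + intros i Hi. destruct (Fin.eq_dec i j) as [->|Hne]; auto.
      destruct Hi as [Hi|Hi]; [congruence|].
      apply (subseq_cv (fun n => u (phi n) i)); auto.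
Qed.

Lemma BWd {d : nat} (u : nat -> point d) M : (forall n i, Rabs (u n i) <= M) ->
  exists phi (z : point d), (forall n, (phi n < phi (S n))%nat) /\
    forall i, Un_cv (fun n => u (phi n) i) (z i).
Proof.
  intros Hb. destruct (BWd_aux u M Hb (allfin d)) as [phi [z [H1 H2]]].
  exists phi, z. split; auto. intros i; apply H2, allfin_In.
Qed.

Lemma att {d : nat} (Q : pset d) M (j : Fin.t d) (a : R) : closed Q ->
  (forall x, Q x -> forall i, Rabs (x i) <= M) -> (exists x, Q x) ->
  exists z, Q z /\ forall y, Q y -> a * z j <= a * y j.
Proof.
  intros Hcl Hb [x0 Hx0].
  set (E := fun r => exists y, Q y /\ r = - (a * y j)).
  assert (HbE : bound E).
  { exists (Rabs a * M). intros r [y [Hy ->]].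
    apply Rle_trans with (Rabs (a * y j)).
    - rewrite <- Rabs_Ropp. apply Rle_abs.
    - rewrite Rabs_mult. apply Rmult_le_compat_l; [apply Rabs_pos|apply Hb; auto]. }
  destruct (completeness E HbE (ex_intro _ _ (ex_intro _ x0 (conj Hx0 eq_refl)))) as [m [Hub Hlub]].
  assert (Hy : forall n, exists y, Q y /\ m - / (INR n + 1) < - (a * y j)).
  { intros n. apply NNPP. intros Hn.
    assert (Hp : 0 < / (INR n + 1)) by (apply Rinv_0_lt_compat; pose proof (pos_INR n); lra).
    assert (Hup : is_upper_bound E (m - / (INR n + 1))).
    { intros r [y [HQ ->]]. apply Rnot_lt_le. intros Hlt. apply Hn. exists y; auto. }
    specialize (Hlub _ Hup). lra. }
  set (ys := fun n => proj1_sig (constructive_indefinite_description _ (Hy n))).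
  assert (Hys : forall n, Q (ys n) /\ m - / (INR n + 1) < - (a * ys n j)).
  { intros n. unfold ys. destruct (constructive_indefinite_description _ (Hy n)); simpl; auto. }
  destruct (BWd ys M (fun n i => Hb _ (proj1 (Hys n)) i)) as [phi [z [Hphi Hz]]].
  assert (HQz : Q z) by (apply (Hcl (fun n => ys (phi n))); auto; intros; apply Hys).
  exists z. split; auto.
  assert (Hmz : m <= - (a * z j)).
  { apply Rle_cv_lim with (Un := fun n => m - / (INR n + 1)) (Vn := fun n => - (a * ys (phi n) j)).
    - intros n. pose proof (proj2 (Hys (phi n))).
      pose proof (incr_ge phi Hphi n) as Hge.
      assert (/ (INR (phi n) + 1) <= / (INR n + 1)).
      { apply Rinv_le_contravar; [pose proof (pos_INR n); lra|]. apply le_INR in Hge. lra. }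
      lra.
    - assert (Hc : Un_cv (fun n => m - / (INR n + 1)) (m - 0)).
      { apply CV_minus; [apply Un_cv_const|apply cv_invn]. }
      rewrite Rminus_0_r in Hc. exact Hc.
    - apply (Un_cv_ext (opp_seq (fun n => a * ys (phi n) j))); [intros; reflexivity|].
      apply CV_opp. apply (CV_mult (fun _ => a)); [apply Un_cv_const|apply Hz]. }
  intros y HQy. assert (Hr : E (- (a * y j))) by (exists y; auto).
  specialize (Hub _ Hr). lra.
Qed.


Definition inbox {d : nat} (M : R) : pset d := fun x => forall i, Rabs (x i) <= M.

Lemma inbox_convex {d : nat} M : convex (@inbox d M).
Proof.
  intros x y t Hx Hy Ht i. specialize (Hx i). specialize (Hy i).
  apply Rle_trans with (t * Rabs (x i) + (1 - t) * Rabs (y i)).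
  - apply Rle_trans with (Rabs (t * x i) + Rabs ((1 - t) * y i)); [apply Rabs_triang|].
    rewrite !Rabs_mult, (Rabs_pos_eq t), (Rabs_pos_eq (1 - t)) by lra. lra.
  - nra.
Qed.

Lemma inbox_closed {d : nat} M : closed (@inbox d M).
Proof.
  intros u x Hu Hcv i.
  assert (H1 : - M <= x i).
  { apply Rle_cv_lim with (Un := fun _ => - M) (Vn := fun n => u n i); auto.
    - intros n. specialize (Hu n i). unfold Rabs in Hu. destruct Rcase_abs; lra.
    - apply Un_cv_const. }
  assert (H2 : x i <= M).
  { apply Rle_cv_lim with (Un := fun n => u n i) (Vn := fun _ => M); auto.
    - intros n. specialize (Hu n i). unfold Rabs in Hu. destruct Rcase_abs; lra.
    - apply Un_cv_const. }
  unfold Rabs. destruct Rcase_abs; lra.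
Qed.

Definition slice {d : nat} (t : point d) (lst : list (Fin.t d)) : pset d :=
  fun x => forall i, In i lst -> x i = t i.

Definition QL {d : nat} M (t : point d) lst (L : list (pset d)) : pset d :=
  fun x => inbox M x /\ slice t lst x /\ forall S, In S L -> S x.

Lemma QL_closed {d : nat} M t lst L : (forall S, In S L -> closed S) -> closed (@QL d M t lst L).
Proof.
  intros HL u x Hu Hcv. split; [|split].
  - apply (inbox_closed M u x (fun n => proj1 (Hu n)) Hcv).
  - intros i Hi. apply (UL_sequence (fun n => u n i)); auto.
    apply (Un_cv_ext (fun _ => t i)); [|apply Un_cv_const].
    intros n. symmetry. apply (proj1 (proj2 (Hu n))); auto.
  - intros S HS. apply (HL S HS u x); auto. intros n; apply (proj2 (proj2 (Hu n))); auto.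
Qed.

Lemma QL_convex {d : nat} M t lst L : (forall S, In S L -> convex S) -> convex (@QL d M t lst L).
Proof.
  intros HL x y s [Hx1 [Hx2 Hx3]] [Hy1 [Hy2 Hy3]] Hs. split; [|split].
  - apply inbox_convex; auto.
  - intros i Hi. simpl. rewrite (Hx2 i Hi), (Hy2 i Hi). ring.
  - intros S HS. apply (HL S HS); [apply Hx3|apply Hy3|]; auto.
Qed.


Lemma fip_step {d : nat} (Phi : pfamily d) (M : R)
  (Hcc : forall S, Phi S -> closed S /\ convex S)
  (Hfin : forall L, (forall S, In S L -> Phi S) -> exists x, inbox M x /\ forall S, In S L -> S x) : forall lst : list (Fin.t d), exists t : point d,
  forall L, (forall S, In S L -> Phi S) -> exists x, QL M t lst L x.
Proof.
  induction lst as [|j lst IH].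
  - exists (fun _ => 0). intros L HL. destruct (Hfin L HL) as [x [H1 H2]].
    exists x. split; [auto|split; [intros i []|auto]].
  - destruct IH as [t Ht].
    set (E := fun a => exists L, (forall S, In S L -> Phi S) /\ forall x, QL M t lst L x -> a <= x j).
    assert (HbE : bound E).
    { exists M. intros a [L [HL Ha]]. destruct (Ht L HL) as [x Hx].
      specialize (Ha x Hx). pose proof (proj1 Hx j). pose proof (Rle_abs (x j)). lra. }
    assert (HE : exists a, E a).
    { exists (- M). exists []. split; [intros S []|]. intros x Hx.
      pose proof (proj1 Hx j). unfold Rabs in H. destruct Rcase_abs; lra. }
    destruct (completeness E HbE HE) as [tau [Hub Hlub]].
    exists (fun i => if Fin.eq_dec i j then tau else t i).
    intros L HL.
    assert (Hcl : closed (QL M t lst L)) by (apply QL_closed; intros S0 HS0; apply (Hcc S0 (HL S0 HS0))).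

    assert (Hcv : convex (QL M t lst L)) by (apply QL_convex; intros S0 HS0; apply (Hcc S0 (HL S0 HS0))).

    assert (Hbd : forall x, QL M t lst L x -> forall i, Rabs (x i) <= M) by (intros x Hx; apply (proj1 Hx)).
    destruct (att _ M j 1 Hcl Hbd (Ht L HL)) as [zmin [Hzmin Hmin]].
    destruct (att _ M j (-1) Hcl Hbd (Ht L HL)) as [zmax [Hzmax Hmax]].
    assert (H1 : zmin j <= tau).
    { apply Hub. exists L. split; auto. intros x Hx. specialize (Hmin x Hx). lra. }
    assert (H2 : tau <= zmax j).
    { apply Hlub. intros a [L' [HL' Ha]].
      destruct (Ht (L' ++ L)) as [x [Hx1 [Hx2 Hx3]]].
      { intros S HS. apply in_app_or in HS as [HS|HS]; auto. }
      assert (HxL' : QL M t lst L' x) by (split; [auto|split; [auto|intros; apply Hx3, in_or_app; auto]]).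
      assert (HxL : QL M t lst L x) by (split; [auto|split; [auto|intros; apply Hx3, in_or_app; auto]]).
      specialize (Ha x HxL'). specialize (Hmax x HxL). lra. }
    assert (Hx : exists x, QL M t lst L x /\ x j = tau).
    { destruct (Req_dec (zmin j) tau) as [Heq|Hne].
      - exists zmin; auto.
      - set (s := (tau - zmin j) / (zmax j - zmin j)).
        assert (Hs : 0 <= s <= 1).
        { unfold s. split.
          - apply Rmult_le_pos; [lra|]. apply Rlt_le, Rinv_0_lt_compat; lra.
          - apply (Rmult_le_reg_r (zmax j - zmin j)); [lra|]. field_simplify; lra. }
        exists (fun i => s * zmax i + (1 - s) * zmin i). split.
        + apply Hcv; auto.
        + unfold s. field. lra. }
    destruct Hx as [x [[Hx1 [Hx2 Hx3]] Hxj]].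
    exists x. split; [auto|split; [|auto]].
    intros i Hi. destruct (Fin.eq_dec i j) as [->|Hne]; auto.
    destruct Hi as [Hi|Hi]; [congruence|]. auto.
Qed.

Lemma fip {d : nat} (Phi : pfamily d) (M : R)
  (Hcc : forall S, Phi S -> closed S /\ convex S)
  (Hfin : forall L, (forall S, In S L -> Phi S) -> exists x, inbox M x /\ forall S, In S L -> S x) : exists x, forall S, Phi S -> S x.
Proof.
  destruct (fip_step Phi M Hcc Hfin (allfin d)) as [t Ht]. exists t. intros S HS.
  destruct (Ht [S]) as [x [_ [Hx2 Hx3]]].
  { intros S' [<-|[]]; auto. }
  assert (E : x = t).
  { apply functional_extensionality; intros i. apply Hx2, allfin_In. }
  rewrite <- E. apply Hx3. left; auto.
Qed.


Lemma dedup {A} (L : list A) : exists L', NoDup L' /\ (forall a, In a L <-> In a L').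
Proof.
  induction L as [|a L [L' [Hn Hi]]].
  - exists []. split; [constructor|tauto].
  - destruct (classic (In a L')) as [Ha|Ha].
    + exists L'. split; auto. intros b. simpl. rewrite Hi. split; [intros [<-|H]|]; auto.
    + exists (a :: L'). split; [constructor; auto|]. intros b. simpl. rewrite Hi. tauto.
Qed.

Lemma partition_ex {A} (P : A -> Prop) (L : list A) : exists L1 L2,
  Permutation L (L1 ++ L2) /\ (forall a, In a L1 -> P a) /\ (forall a, In a L2 -> ~ P a).
Proof.
  induction L as [|a L [L1 [L2 [Hp [H1 H2]]]]].
  - exists [], []. simpl. repeat split; auto; intros a [].
  - destruct (classic (P a)) as [Ha|Ha].
    + exists (a :: L1), L2. simpl. split; [constructor; auto|]. split; auto.
      intros b [<-|Hb]; auto.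
    + exists L1, (a :: L2). split.
      * eapply perm_trans; [apply perm_skip, Hp|]. apply Permutation_middle.
      * split; auto. intros b [<-|Hb]; auto.
Qed.

Lemma NoDup_firstn' {A} k (l : list A) : NoDup l -> NoDup (firstn k l).
Proof.
  intros H. rewrite <- (firstn_skipn k l) in H. eapply NoDup_app_remove_r; eauto.
Qed.

Lemma boundB {d : nat} (l : list (pset d)) : (forall S, In S l -> Defs.bounded S) ->
  exists M : R, forall S, In S l -> forall x : point d, S x -> @inbox d M x.
Proof.
  induction l as [|S0 l IH]; intros H.
  - exists 0. intros S [].
  - destruct IH as [M HM]. { intros; apply H; right; auto. }
    destruct (H S0 (or_introl eq_refl)) as [M0 HM0].
    exists (Rmax M M0). intros S [<-|HS] x Hx i.
    + eapply Rle_trans; [apply HM0; auto|apply Rmax_r].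
    + eapply Rle_trans; [apply (HM S HS x Hx)|apply Rmax_l].
Qed.

Theorem lemma3p2 (d p q : nat) (hp : (1 <= p)%nat) (hq : (1 <= q)%nat)
  (hpq : (q <= p)%nat) (hqd : (d + 1 <= q)%nat)
  (F B : pfamily d)
  (hFinf : infinite_family F)
  (hFcc : forall S, F S -> closed S /\ convex S)
  (hFprop : pq_property (d + 1) (d + 1) F)
  (hBfree : m_free (q - d) B)
  (hBcard : has_card (p - d) B)
  (hunion : pq_property p q (family_union F B)) :
  exists x : point d, forall S, F S -> S x.
Proof.
  destruct hBcard as [Bl [HBnd [HBlen HBiff]]].
  destruct hBfree as [HBcc HBfree].
  destruct (boundB Bl) as [M HM].
  { intros S HS. apply (HBcc S (proj2 (HBiff S) HS)). }
  assert (HBM : forall S, B S -> forall x, S x -> inbox M x) by (intros S HS; apply HM, HBiff; auto).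
  assert (Hfresh : forall L, exists S, F S /\ ~ In S L).
  { intros L. apply NNPP. intros Hn. apply hFinf. exists L. intros S HS.
    apply NNPP. intros HnS. apply Hn. exists S; auto. }
  assert (Hext : forall (avoid : list (pset d)) k L, NoDup L -> exists E, length E = k /\ NoDup (E ++ L) /\
    forall S, In S E -> F S /\ ~ In S avoid).
  { intros avoid k L HL. induction k as [|k [E [HEl [HEn HEF]]]].
    - exists []. simpl. split; [auto|split; [auto|intros S0 []]].
    - destruct (Hfresh (E ++ L ++ avoid)) as [S [HS HnS]].
      exists (S :: E). simpl. split; [auto|split].
      + constructor; auto. intros Hin. apply HnS. apply in_app_or in Hin as [H|H]; apply in_or_app; [left|right]; auto.
        apply in_or_app; left; auto.
      + intros S' [<-|HS']; auto. split; auto. intros Hin; apply HnS. apply in_or_app; right; apply in_or_app; right; auto. }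
  destruct hFprop as [_ HFp].
  assert (HA : forall L, NoDup L -> (forall S, In S L -> F S) -> length L = (d + 1)%nat -> common_point L).
  { intros L Hn HF Hl. destruct (HFp L (conj Hn HF) Hl) as [L' [Hn' [Hl' [Hi' [x Hx]]]]].
    exists x. intros S HS. apply Hx. apply (NoDup_length_incl (l:=L') (l':=L) Hn'); auto. lia. }
  assert (HA' : forall L, (forall S, In S L -> F S) -> (length L <= d + 1)%nat -> common_point L).
  { intros L HF Hl. destruct (dedup L) as [L0 [Hn0 Hi0]].
    assert (Hl0 : (length L0 <= length L)%nat) by (apply NoDup_incl_length; auto; intros a; apply Hi0).
    destruct (Hext [] (d + 1 - length L0)%nat L0 Hn0) as [E [HEl [HEn HEF]]].
    destruct (HA (E ++ L0)) as [x Hx]; auto.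
    - intros S HS. apply in_app_or in HS as [HS|HS]; [apply HEF; auto|apply HF, Hi0; auto].
    - rewrite length_app. lia.
    - exists x. intros S HS. apply Hx. apply in_or_app; right; apply Hi0; auto. }
  assert (HB : forall L, (forall S, In S L -> F S) -> (length L <= d)%nat ->
     exists x, inbox M x /\ forall S, In S L -> S x).
  { intros L HF Hl. destruct (dedup L) as [L0 [Hn0 Hi0]].
    assert (Hl0 : (length L0 <= length L)%nat) by (apply NoDup_incl_length; auto; intros a; apply Hi0).
    assert (HF0 : forall S, In S L0 -> F S) by (intros S HS; apply HF, Hi0; auto).
    destruct (classic (exists S, In S L0 /\ B S)) as [[S0 [HS0 HBS0]]|HnB].
    - destruct (HA' L0 HF0) as [x Hx]; [lia|].
      exists x. split. { apply (HBM S0 HBS0). apply Hx. auto. } intros S HS; apply Hx, Hi0; auto.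
    - destruct (Hext Bl (d - length L0)%nat L0 Hn0) as [E [HEl [HEn HEF]]].
      set (Fl := E ++ L0).
      assert (HFl : forall S, In S Fl -> F S /\ ~ In S Bl).
      { intros S HS. apply in_app_or in HS as [HS|HS]; auto.
        split; auto. intros HSB. apply HnB. exists S. split; auto. apply HBiff; auto. }
      assert (HFll : length Fl = d) by (unfold Fl; rewrite length_app; lia).
      assert (Hmem : members (family_union F B) (Bl ++ Fl)).
      { split.
        - apply NoDup_app; auto. intros a Ha HaF. apply (proj2 (HFl a HaF)); auto.
        - intros S HS. apply in_app_or in HS as [HS|HS].
          + right. apply HBiff; auto.
          + left. apply HFl; auto. }
      destruct (proj2 hunion (Bl ++ Fl) Hmem) as [L' [Hn' [Hl' [Hi' [x Hx]]]]].
      { rewrite length_app. lia. }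
      destruct (partition_ex (fun S => In S Bl) L') as [L1 [L2 [Hp [H1 H2]]]].
      assert (Hn12 : NoDup (L1 ++ L2)) by (eapply Permutation_NoDup; eauto).
      assert (Hn1 : NoDup L1) by (eapply NoDup_app_remove_r; eauto).
      assert (Hn2 : NoDup L2) by (eapply NoDup_app_remove_l; eauto).
      assert (Hlen12 : (length L1 + length L2)%nat = q).
      { rewrite <- length_app, <- (Permutation_length Hp). auto. }
      assert (HinL' : forall a, In a (L1 ++ L2) -> In a L').
      { intros a Ha. apply (Permutation_in _ (Permutation_sym Hp)); auto. }
      assert (Hi2 : incl L2 Fl).
      { intros a Ha. assert (HaL : In a (Bl ++ Fl)) by (apply Hi', HinL', in_or_app; auto).
        apply in_app_or in HaL as [HaL|HaL]; auto. exfalso; apply (H2 a); auto. }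
      assert (Hl1 : (length L1 <= q - d)%nat).
      { destruct (Nat.le_gt_cases (length L1) (q - d)) as [Hle|Hgt]; auto. exfalso.
        apply (HBfree (firstn (q - d + 1) L1)).
        - split; [apply NoDup_firstn'; auto|]. intros S HS. apply HBiff, H1. eapply In_firstn; eauto.
        - apply firstn_length_le. lia.
        - exists x. intros S HS. apply Hx, HinL', in_or_app. left. eapply In_firstn; eauto. }
      assert (Hl2 : (length L2 <= d)%nat) by (rewrite <- HFll; apply NoDup_incl_length; auto).
      assert (HFl2 : incl Fl L2) by (apply NoDup_length_incl; auto; lia).
      destruct L1 as [|S1 L1'].
      + simpl in Hlen12. lia.
      + exists x. split.
        * apply (HBM S1).
          -- apply HBiff, H1. left; auto.
          -- apply Hx, HinL'. left; auto.
        * intros S HS. apply Hx, HinL', in_or_app. right. apply HFl2. unfold Fl. apply in_or_app. right. apply Hi0; auto. }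
  assert (HC : forall L, (forall S, In S L -> F S) -> exists x, inbox M x /\ forall S, In S L -> S x).
  { intros L HF.
    destruct (helly (inbox M :: L)) as [x Hx].
    - intros S [<-|HS]; [apply inbox_convex|apply hFcc, HF; auto].
    - intros L' Hi' Hl'.
      destruct (partition_ex (fun S => S = inbox M) L') as [L1 [L2 [Hp [H1 H2]]]].
      assert (HF2 : forall S, In S L2 -> F S).
      { intros S HS. assert (HS' : In S L') by (apply (Permutation_in _ (Permutation_sym Hp)), in_or_app; auto).
        destruct (Hi' S HS') as [HSe|HSL]; [exfalso; apply (H2 S); auto|apply HF; auto]. }
      assert (Hlen : length L' = (length L1 + length L2)%nat) by (rewrite <- length_app; apply Permutation_length; auto).
      destruct L1 as [|S1 L1'].
      + destruct (HA' L2 HF2) as [x Hx]; [simpl in Hlen; lia|].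
        exists x. intros S HS. apply Hx. apply (Permutation_in _ Hp) in HS. simpl in HS. exact HS.
      + destruct (HB L2 HF2) as [x [Hxb Hx]]; [simpl in Hlen; lia|].
        exists x. intros S HS. apply (Permutation_in _ Hp) in HS. apply in_app_or in HS as [HS|HS].
        * rewrite (H1 S HS). exact Hxb.
        * apply Hx; exact HS.
    - exists x. split; [apply Hx; left; auto|]. intros S HS; apply Hx; right; auto. }
  exact (fip F M hFcc HC).
Qed.
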